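(* Let $G_l$ be a graph of order $n_l$, maximum degree $\Delta_l$ and minimum degree $\delta_l$, $l\in\{1,2\}$. Then for $i,j\in\{1,2\}$ with $i\neq j$ and every integer $k\in\{2-\delta_j-\Delta_i,\dots,\Delta_i-\delta_j\}$, $$\phi_k^o(G_1\times G_2)\ge n_j\,\phi_{k+\delta_j}^o(G_i).$$
   Context: All graphs are finite and simple. For a graph $G=(V,E)$, a set $S\subseteq V$ and $v\in V$, let $\delta_S(v)=|\{u\in S: uv\in E\}|$, $\overline{S}=V\setminus S$, and let $\partial S$ be the set of vertices of $\overline S$ adjacent to at least one vertex of $S$. For an integer $k$, a non-empty set $S\subseteq V$ is an offensive $k$-alliance if $\delta_S(v)\ge \delta_{\overline S}(v)+k$ for every $v\in \partial S$. A set $X\subseteq V$ is an offensive $k$-alliance free set ($k$-oaf set) if no offensive $k$-alliance $S$ satisfies $S\subseteq X$. $\phi_k^o(G)$ denotes the maximum cardinality of a $k$-oaf set in $G$. The Cartesian product $G_1\times G_2$ of $G_1=(V_1,E_1)$, $G_2=(V_2,E_2)$ has vertex set $V_1\times V_2$, with $(a,b)$ adjacent to $(c,d)$ iff either $a=c$ and $bd\in E_2$, or $b=d$ and $ac\in E_1$. *)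

(* Defs.v *)
From HB Require Import structures.
From mathcomp Require Import all_boot all_order all_algebra.
Set Implicit Arguments. Unset Strict Implicit. Unset Printing Implicit Defensive.
Import Order.TTheory GRing.Theory Num.Theory.

Definition simple_graph (T : finType) (e : rel T) : Prop :=
  symmetric e /\ irreflexive e.

Definition nbr_in (T : finType) (e : rel T) (S : {set T}) (v : T) : nat :=
  #|[set u in S | e u v]|.

Definition degree (T : finType) (e : rel T) (v : T) : nat := nbr_in e setT v.

(* maximum and minimum degree (min over empty vertex set defaults to #|T| = 0) *)
Definition maxdeg (T : finType) (e : rel T) : nat := \max_(v : T) degree e v.
Definition mindeg (T : finType) (e : rel T) : nat :=
  \big[minn/#|T|]_(v : T) degree e v.

Definition boundary (T : finType) (e : rel T) (S : {set T}) : {set T} :=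
  [set v in ~: S | [exists u in S, e u v]].

Definition off_alliance (T : finType) (e : rel T) (k : int) (S : {set T}) : bool :=
  (S != set0) &&
  [forall v in boundary e S,
     ((nbr_in e (~: S) v)%:Z + k <= (nbr_in e S v)%:Z)%R].

Definition oaf_set (T : finType) (e : rel T) (k : int) (X : {set T}) : bool :=
  [forall S : {set T}, (S \subset X) ==> ~~ off_alliance e k S].

Definition phi_o (T : finType) (e : rel T) (k : int) : nat :=
  \max_(X : {set T} | oaf_set e k X) #|X|.

Definition cart_rel (T1 T2 : finType) (e1 : rel T1) (e2 : rel T2) : rel (T1 * T2) :=
  [rel x y | ((x.1 == y.1) && e2 x.2 y.2) || ((x.2 == y.2) && e1 x.1 y.1)].

(* Main.v *)
Require Import Defs.
From HB Require Import structures.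
From mathcomp Require Import all_boot all_order all_algebra.
From mathcomp Require Import zify.
Import Order.TTheory GRing.Theory Num.Theory.

Lemma bigmin_le (I:finType) (F: I -> nat) m i0: \big[minn/m]_(i : I) F i <= F i0.
Proof.
have : i0 \in index_enum I by rewrite mem_index_enum.
elim: (index_enum I) => [|x r IH] //.
rewrite big_cons in_cons => /orP [/eqP<-|/IH H]; first exact: geq_minl.
exact: leq_trans (geq_minr _ _) H.
Qed.

Lemma key (T T' P : finType) (e : rel T) (e' : rel T') (E : rel P)
  (f : T * T' -> P) (g : P -> T * T') (fK : cancel f g) (gK : cancel g f)
  (ie' : irreflexive e')
  (hE : forall a b c d, E (f (a,b)) (f (c,d)) = ((b == d) && e a c) || ((a == c) && e' b d))
  (k : int) (X : {set T}) :
  oaf_set e (k + (mindeg e')%:Z)%R X -> oaf_set E k (f @: setX X [set: T']).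
Proof.
move=> /forallP oX; apply/forallP => S; apply/implyP => sSY.
apply/negP => /andP [S0 /forallP aS].
set A := [set a | [exists b, f (a,b) \in S]].
have sAX : A \subset X.
  apply/subsetP => a; rewrite inE => /existsP [b Hb].
  have := subsetP sSY _ Hb; case/imsetP => -[c d]; rewrite inE /=.
  by move=> /andP [cX _] /(can_inj fK) [-> _].
have A0 : A != set0.
  case/set0Pn: S0 => x xS; apply/set0Pn; exists (g x).1; rewrite inE.
  by apply/existsP; exists (g x).2; rewrite -surjective_pairing gK.
have := oX A; rewrite sAX /= /off_alliance A0 /= => /forallPn [v].
rewrite negb_imply => /andP [vB]; rewrite -ltNge => Hv.
move: vB; rewrite inE => /andP [vnA /existsP [u /andP [uA euv]]].
have vnA' : forall d, f (v,d) \notin S.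
  move=> d; apply/negP => H; move: vnA; rewrite !inE => /negP; apply.
  by apply/existsP; exists d.
move: (uA); rewrite inE => /existsP [b ubS].
have wB : f (v,b) \in boundary E S.
  rewrite inE in_setC vnA' /=; apply/existsP; exists (f (u,b)).
  by rewrite ubS hE eqxx euv.
have := aS (f (v,b)); rewrite wB /= => Hw.
have hS : forall x, x \in S -> E x (f (v,b)) -> (g x).2 = b /\ e (g x).1 v.
  move=> x; rewrite -(gK x); case: (g x) => c d; rewrite hE fK /=.
  move=> xS; case/orP => /andP [/eqP cd H]; first by rewrite cd.
  by move: (vnA' d); rewrite -cd xS.
have H1 : nbr_in E S (f (v,b)) <= nbr_in e A v.
  rewrite /nbr_in -(@card_in_imset _ _ (fun x => (g x).1) [set x in S | E x (f (v,b))]).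
  - apply: subset_leq_card; apply/subsetP => y /imsetP [x].
    rewrite inE => /andP [xS Exw] ->.
    have [h2 h1] := hS x xS Exw.
    rewrite inE h1 andbT inE; apply/existsP; exists b.
    by rewrite -h2 -surjective_pairing gK.
  - move=> x y; rewrite !inE => /andP [xS Exw] /andP [yS Eyw] Hxy.
    apply: (can_inj gK).
    rewrite (surjective_pairing (g x)) (surjective_pairing (g y)) Hxy.
    by rewrite (hS x xS Exw).1 (hS y yS Eyw).1.
set B1 := [set (a, b) | a in [set a in ~:A | e a v]].
set B2 := [set (v, d) | d in [set d in setT | e' d b]].
have H2 : #|B1| + #|B2| <= nbr_in E (~:S) (f (v,b)).
  have <- : #|B1 :|: B2| = #|B1| + #|B2|.
    rewrite cardsU; suff -> : B1 :&: B2 = set0 by rewrite cards0 subn0.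
    apply/setP => z; rewrite !inE; apply/negP => /andP [/imsetP [a _ ->]].
    case/imsetP => d; rewrite inE => /andP [_ edb] [_ db].
    by rewrite -db ie' in edb.
  rewrite /nbr_in -(card_imset _ (can_inj fK)); apply: subset_leq_card.
  apply/subsetP => y /imsetP [z zU ->]; rewrite inE.
  case/setUP: zU => /imsetP [a].
  - rewrite !inE => /andP [anA eav] ->; rewrite hE eqxx eav /= andbT.
    apply/negP => H; move/negP: anA; apply; by apply/existsP; exists b.
  - rewrite !inE /= => edb ->; rewrite hE eqxx edb orbT andbT.
    exact: vnA'.
have e1 : nbr_in e (~:A) v = #|B1| by rewrite card_imset // => a a' [].
have e2 : degree e' b = #|B2| by rewrite card_imset // => d d' [].
have H3 : mindeg e' <= degree e' b by apply: bigmin_le.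
move: Hw Hv; rewrite -!e1 -e2 in H2.
lia.
Qed.

Lemma count (T T' P : finType) (e : rel T) (e' : rel T') (E : rel P)
  (f : T * T' -> P) (g : P -> T * T') (fK : cancel f g) (gK : cancel g f)
  (ie' : irreflexive e')
  (hE : forall a b c d, E (f (a,b)) (f (c,d)) = ((b == d) && e a c) || ((a == c) && e' b d))
  (k : int) :
  #|T'| * phi_o e (k + (mindeg e')%:Z)%R <= phi_o E k.
Proof.
set k' := (k + (mindeg e')%:Z)%R.
have h0 : 0 < #|[pred X : {set T} | oaf_set e k' X]|.
  apply/card_gt0P; exists set0; rewrite inE /oaf_set; apply/forallP => S.
  by apply/implyP; rewrite subset0 => /eqP ->; rewrite /off_alliance eqxx.
case: (eq_bigmax_cond (fun X : {set T} => #|X|) h0) => X oX eqX.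
rewrite /phi_o.
change (#|T'| * \max_(X in [pred X : {set T} | oaf_set e k' X]) #|X| <=
  \max_(X | oaf_set E k X) #|X|).
rewrite eqX mulnC -cardsT -cardsX -(card_imset _ (can_inj fK)).
apply: leq_bigmax_cond; apply: key => //; exact: gK.
Qed.

Theorem corollary3 (T1 T2 : finType) (e1 : rel T1) (e2 : rel T2)
    (g1 : simple_graph e1) (g2 : simple_graph e2) :
  (forall k : int,
     (2%:Z - (mindeg e2)%:Z - (maxdeg e1)%:Z <= k)%R ->
     (k <= (maxdeg e1)%:Z - (mindeg e2)%:Z)%R ->
     #|T2| * phi_o e1 (k + (mindeg e2)%:Z)%R <= phi_o (cart_rel e1 e2) k)
  /\
  (forall k : int,
     (2%:Z - (mindeg e1)%:Z - (maxdeg e2)%:Z <= k)%R ->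
     (k <= (maxdeg e2)%:Z - (mindeg e1)%:Z)%R ->
     #|T1| * phi_o e2 (k + (mindeg e1)%:Z)%R <= phi_o (cart_rel e1 e2) k).
Proof.
case: g1 => _ i1; case: g2 => _ i2; split=> k _ _.
- apply: (@count _ _ _ _ _ _ id id) => // a b c d.
  by rewrite /= orbC.
- apply: (@count _ _ _ _ _ _ (fun u => (u.2, u.1)) (fun u => (u.2, u.1))) => //.
  + by case.
  + by case.
Qed.
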